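(* Let $X$ be a shift space over a finite alphabet. If $X$ has the almost specification property, then $X$ is both boundedly supermultiplicative and balanced.
   Context: For a shift space $X\subseteq\mathcal{A}^{\mathbb{Z}}$ ($\mathcal{A}$ finite), $\mathcal{B}_n(X)$ denotes the set of words of length $n$ appearing in points of $X$, and $\mathcal{B}(X)=\bigcup_{n\ge1}\mathcal{B}_n(X)$. For $\omega\in\mathcal{B}(X)$ and $r\in\mathbb{N}$, $\mathcal{B}_{\omega,r}(X)$ is the set of words $u$ of length $r$ such that $\omega u\in\mathcal{B}(X)$. $X$ has the almost specification property if there is $N\ge1$ such that for all $u,v\in\mathcal{B}(X)$ there exists $w\in\mathcal{B}(X)$ with $|w|\le N$ and $uwv\in\mathcal{B}(X)$. $X$ is boundedly supermultiplicative if there is $K\ge1$ with $|\mathcal{B}_m(X)|\cdot|\mathcal{B}_n(X)|\le K|\mathcal{B}_{m+n}(X)|$ for all $m,n\ge1$. $X$ is balanced if there is $B>0$ such that $|\mathcal{B}_{\omega,r}(X)|/|\mathcal{B}_r(X)|\ge B$ for every $\omega\in\mathcal{B}(X)$ and every $r\in\mathbb{N}$. *)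

(* Defs.v *)
From mathcomp Require Import all_boot all_order all_algebra.
From mathcomp Require Import boolp reals.
Set Implicit Arguments. Unset Strict Implicit. Unset Printing Implicit Defensive.
Import Order.TTheory GRing.Theory Num.Theory.

Local Open Scope ring_scope.

Section Shifts.
Variable A : finType.

Definition shift (x : int -> A) : int -> A := fun i => x (i + 1).

(* X is closed in the product topology: x is in X as soon as every central
   window x_[-n, n] is the corresponding window of some point of X. *)
Definition closed_subshift (X : (int -> A) -> Prop) : Prop :=
  forall x : int -> A,
    (forall n : nat, exists y, X y /\
        forall i : int, - (n%:Z) <= i <= n%:Z -> y i = x i) -> X x.

Definition shift_space (X : (int -> A) -> Prop) : Prop :=
  closed_subshift X /\ (forall x, X x <-> X (shift x)).

Definition occurs (u : seq A) (x : int -> A) : Prop :=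
  exists i : int, forall k : nat, (k < size u)%N ->
    x (i + k%:Z) = nth (x 0) u k.

Definition inB (X : (int -> A) -> Prop) (u : seq A) : Prop :=
  (0 < size u)%N /\ exists x, X x /\ occurs u x.

Definition Bn (X : (int -> A) -> Prop) (n : nat) : {set n.-tuple A} :=
  [set t : n.-tuple A | `[< inB X (val t) >]].

Definition Bwr (X : (int -> A) -> Prop) (w : seq A) (r : nat) : {set r.-tuple A} :=
  [set t : r.-tuple A | `[< inB X (w ++ val t) >]].

Definition almost_specification (X : (int -> A) -> Prop) : Prop :=
  exists N : nat, (1 <= N)%N /\
    forall u v : seq A, inB X u -> inB X v ->
      exists w : seq A, inB X w /\ (size w <= N)%N /\ inB X (u ++ w ++ v).

Definition boundedly_supermultiplicative (R : realType)
    (X : (int -> A) -> Prop) : Prop :=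
  exists K : R, 1 <= K /\
    forall m n : nat, (1 <= m)%N -> (1 <= n)%N ->
      (#|Bn X m| * #|Bn X n|)%:R <= K * #|Bn X (m + n)|%:R.

Definition balanced (R : realType) (X : (int -> A) -> Prop) : Prop :=
  exists B : R, 0 < B /\
    forall (w : seq A) (r : nat), inB X w -> (1 <= r)%N ->
      B <= #|Bwr X w r|%:R / #|Bn X r|%:R.

End Shifts.

(* Main.v *)
Require Import Defs.
From mathcomp Require Import all_boot all_order all_algebra.
From mathcomp Require Import boolp reals.
Set Implicit Arguments. Unset Strict Implicit. Unset Printing Implicit Defensive.
Import Order.TTheory GRing.Theory Num.Theory.

Section Aux.
Variable B : finType.

Lemma pmap_pad (s : seq B) k : pmap id (map Some s ++ nseq k None) = s.
Proof. by elim: s => [|a s IH] /=; [elim: k | rewrite IH]. Qed.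

Definition pad (c : nat) (s : seq B) : c.-tuple (option B) :=
  insubd [tuple of nseq c None] (map Some s ++ nseq (c - size s) None).

Lemma pad_inj c s1 s2 : (size s1 <= c)%N -> (size s2 <= c)%N -> pad c s1 = pad c s2 -> s1 = s2.
Proof.
move=> h1 h2 /(congr1 val); rewrite /pad !val_insubd !size_cat !size_map !size_nseq.
rewrite !subnKC // !eqxx => /(congr1 (pmap id)); by rewrite !pmap_pad.
Qed.

Lemma count_lemma (T1 T2 : finType) (D : {set T1}) (E : {set T2}) (c : nat)
  (R : T1 -> T2 -> seq B -> Prop) :
  (forall p, p \in D -> exists q s, [/\ q \in E, (size s <= c)%N & R p q s]) ->
  (forall p1 p2 q s, p1 \in D -> p2 \in D -> R p1 q s -> R p2 q s -> p1 = p2) ->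
  (#|D| <= #|E| * (#|B|).+1 ^ c)%N.
Proof.
move=> hex hinj.
case: (set_0Vmem D) => [->|[p0 p0D]]; first by rewrite cards0.
have [q0 [s0 _]] := hex p0 p0D.
have : forall p, exists qs : T2 * seq B, p \in D ->
    [/\ qs.1 \in E, (size qs.2 <= c)%N & R p qs.1 qs.2].
  move=> p; case: (boolP (p \in D)) => pD; last by exists (q0, s0).
  by have [q [s h]] := hex p pD; exists (q, s).
case/choice => f hf.
pose g p := ((f p).1, pad c (f p).2).
have <- : #|g @: D| = #|D|.
  apply: card_in_imset => p1 p2 h1 h2 [e1 e2].
  have [_ s1 r1] := hf p1 h1; have [_ s2 r2] := hf p2 h2.
  have e3 := pad_inj s1 s2 e2.
  by apply: (hinj p1 p2 (f p1).1 (f p1).2) => //; rewrite e1 e3.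
rewrite -card_option -card_tuple -cardsT -cardsX.
apply: subset_leq_card; apply/subsetP => _ /imsetP[p pD ->].
by have [h _ _] := hf p pD; rewrite in_setX h in_setT.
Qed.
End Aux.

Lemma inB_take (A : finType) (X : (int -> A) -> Prop) s k :
  inB X s -> (0 < k)%N -> inB X (take k s).
Proof.
move=> [s0 [x [Xx [i hi]]]] k0; split.
  by rewrite size_take; case: ifP.
exists x; split => //; exists i => j hj.
have hj' : (j < size s)%N by apply: leq_trans hj _; rewrite size_take_min geq_minr.
have hjk : (j < k)%N by apply: leq_trans hj _; rewrite size_take_min geq_minl.
by rewrite nth_take // hi.
Qed.

Lemma inB_Bn (A : finType) (X : (int -> A) -> Prop) n (t : n.-tuple A) :
  (t \in Bn X n) = `[< inB X t >].
Proof. by rewrite inE. Qed.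

Lemma supermult (A : finType) (X : (int -> A) -> Prop) N :
  (forall u v : seq A, inB X u -> inB X v ->
      exists w : seq A, inB X w /\ (size w <= N)%N /\ inB X (u ++ w ++ v)) ->
  forall m n, (1 <= m)%N ->
  (#|Bn X m| * #|Bn X n| <= #|Bn X (m + n)| * (#|A|).+1 ^ N)%N.
Proof.
move=> spec m n m1.
rewrite -cardsX.
apply: (@count_lemma A _ _ _ _ N
  (fun p q s => exists w : seq A, size w = size s /\
     val q ++ s = val p.1 ++ w ++ val p.2)).
- move=> [u v]; rewrite in_setX /= !inE => /andP[/asboolP hu /asboolP hv].
  have [w [_ [wN hw]]] := spec _ _ hu hv.
  set S := val u ++ w ++ val v.
  have sS : size S = (m + n + size w)%N by rewrite /S !size_cat !size_tuple addnA addnAC.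
  exists (insubd (cat_tuple u v) (take (m + n) S)), (drop (m + n) S).
  have vq : val (insubd (cat_tuple u v) (take (m + n) S) : (m+n).-tuple A) = take (m + n) S.
    by rewrite val_insubd size_takel ?eqxx // sS leq_addr.
  split.
  + rewrite inE; apply/asboolP; rewrite vq; apply: inB_take => //.
    by apply: leq_trans m1 (leq_addr _ _).
  + by rewrite size_drop sS addKn.
  + by exists w; rewrite vq cat_take_drop size_drop sS addKn.
- move=> [u1 v1] [u2 v2] q s _ _ [w1 [e1 h1]] [w2 [e2 h2]] /=.
  move: h1; rewrite h2 => /eqP; rewrite eqseq_cat ?size_tuple // => /andP[/eqP hu].
  rewrite eqseq_cat ?e1 ?e2 // => /andP[_ /eqP hv].
  by congr pair; apply: val_inj.
Qed.

Lemma bal (A : finType) (X : (int -> A) -> Prop) N :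
  (forall u v : seq A, inB X u -> inB X v ->
      exists w : seq A, inB X w /\ (size w <= N)%N /\ inB X (u ++ w ++ v)) ->
  forall om r, inB X om -> (1 <= r)%N ->
  (#|Bn X r| <= #|Bwr X om r| * (#|A|).+1 ^ N)%N.
Proof.
move=> spec om r hom r1.
apply: (@count_lemma A _ _ _ _ N
  (fun v q s => exists w : seq A, size w = size s /\ val q ++ s = w ++ val v)).
- move=> v; rewrite !inE => /asboolP hv.
  have [w [_ [wN hw]]] := spec _ _ hom hv.
  set S := w ++ val v.
  have sS : size S = (r + size w)%N by rewrite /S size_cat size_tuple addnC.
  exists (insubd v (take r S)), (drop r S).
  have vq : val (insubd v (take r S) : r.-tuple A) = take r S.
    by rewrite val_insubd size_takel ?eqxx // sS leq_addr.
  split.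
  + rewrite inE; apply/asboolP; rewrite vq.
    have -> : om ++ take r S = take (size om + r) (om ++ S) by rewrite take_cat ltnNge leq_addr /= addKn.
    apply: inB_take => //; by rewrite addn_gt0 r1 orbT.
  + by rewrite size_drop sS addKn.
  + by exists w; rewrite vq cat_take_drop size_drop sS addKn.
- move=> v1 v2 q s _ _ [w1 [e1 h1]] [w2 [e2 h2]] /=.
  move: h1; rewrite h2 => /eqP; rewrite eqseq_cat ?e1 ?e2 // => /andP[_ /eqP hv].
  by apply: val_inj.
Qed.

Lemma Bn_pos (A : finType) (X : (int -> A) -> Prop) om r :
  inB X om -> (0 < r)%N -> (0 < #|Bn X r|)%N.
Proof.
move=> [_ [x [Xx _]]] r0.
pose s := mkseq (fun k => x (Posz k)) r.
have hs : size s == r by rewrite size_mkseq.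
apply/card_gt0P; exists (Tuple hs); rewrite inE; apply/asboolP.
split; first by rewrite /= size_mkseq.
exists x; split => //; exists 0 => k hk /=.
rewrite /= size_mkseq in hk.
by rewrite nth_mkseq // add0r.
Qed.

Unset Implicit Arguments.
Local Open Scope ring_scope.
Theorem theorem3p7 (R : realType) (A : finType) (X : (int -> A) -> Prop) :
  shift_space X -> almost_specification X ->
  boundedly_supermultiplicative R X /\ balanced R X.
Proof.
move=> _ [N [N1 spec]].
have Cpos : (0 < (#|A|).+1 ^ N)%N by rewrite expn_gt0.
split.
- exists ((#|A|).+1 ^ N)%:R; split; first by rewrite ler1n.
  move=> m n m1 n1; rewrite -natrM ler_nat [X in (_ <= X)%N]mulnC.
  exact: supermult.
- exists ((((#|A|).+1 ^ N)%:R : R)^-1); split; first by rewrite invr_gt0 ltr0n.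
  move=> w r hw r1.
  have hB := Bn_pos hw r1.
  rewrite ler_pdivlMr; last by rewrite ltr0n.
  rewrite mulrC ler_pdivrMr; last by rewrite ltr0n.
  rewrite -natrM ler_nat.
  exact: bal.
Qed.
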